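(* Let $G$ be a connected graph and $I\subseteq V(G)$. (1) If $I$ is a pre-cycle core of $G$, then $\pi_1(G|_I;x,y)=\pi_1(G;x,y)$ for all $x,y\in I$. (2) Conversely, if $x\in I$ and $\pi_1(G|_I;x)=\pi_1(G;x)$, then the connected component of $G|_I$ containing $x$ contains all cycles of $G$.
   Context: Graphs are simple and unoriented, possibly infinite. A cycle in $G$ is a closed path $(x_0,\dots,x_n=x_0)$ with no repeated vertices except $x_0=x_n$ and no edges $(x_i,x_j)$ of $G$ with $i-j\not\equiv0,\pm1\pmod n$. A pre-cycle core of $G$ is a subset $I\subseteq V(G)$ such that $G|_I$ is connected and contains all cycles of $G$. The fundamental groupoid of $G$ has, for vertices $x,y$, the set $\pi_1(G;x,y)$ of homotopy classes of paths from $x$ to $y$ (equivalently, the set of non-backtracking paths from $x$ to $y$, each class having a unique non-backtracking representative); $\pi_1(G;x)=\pi_1(G;x,x)$. For a subgraph $H$, $\pi_1(H;x,y)$ is regarded naturally as a subset of $\pi_1(G;x,y)$. *)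

(* Defs.v *)
From mathcomp Require Import all_boot.
Set Implicit Arguments. Unset Strict Implicit. Unset Printing Implicit Defensive.

Section Graphs.
Variable V : Type.

Definition simple_graph (adj : V -> V -> Prop) : Prop :=
  (forall a b, adj a b -> adj b a) /\ (forall a, ~ adj a a).

Definition induced (adj : V -> V -> Prop) (I : V -> Prop) : V -> V -> Prop :=
  fun a b => I a /\ I b /\ adj a b.

(* A path (x_0 = x, x_1, ..., x_n) is represented by x and the list [x_1;...;x_n]. *)
Fixpoint is_walk (adj : V -> V -> Prop) (x : V) (p : seq V) : Prop :=
  match p with
  | [::] => True
  | y :: q => adj x y /\ is_walk adj y q
  end.

Fixpoint non_backtracking (x : V) (p : seq V) : Prop :=
  match p with
  | y :: ((z :: _) as q) => x <> z /\ non_backtracking y q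
  | _ => True
  end.

(* pi_1(G; x, y), realised (via unique non-backtracking representatives)
   as the set of non-backtracking paths from x to y. *)
Definition pi1 (adj : V -> V -> Prop) (x y : V) (p : seq V) : Prop :=
  is_walk adj x p /\ non_backtracking x p /\ last x p = y.

Definition connected (adj : V -> V -> Prop) : Prop :=
  forall a b : V, exists p, is_walk adj a p /\ last a p = b.

Definition connected_on (adj : V -> V -> Prop) (I : V -> Prop) : Prop :=
  (exists a, I a) /\
  forall a b, I a -> I b -> exists p, is_walk (induced adj I) a p /\ last a p = b.

(* A cycle (x_0, ..., x_{n-1}, x_n = x_0), given by the list c = [x_0;...;x_{n-1}]
   (x0 is only a default value for nth). n >= 3, no repeated vertices, and
   x_i ~ x_j iff i - j = +-1 mod n (consecutive edges present, no chords). *)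
Definition is_cycle (adj : V -> V -> Prop) (x0 : V) (c : seq V) : Prop :=
  let n := size c in
  3 <= n /\
  (forall i j, i < n -> j < n -> nth x0 c i = nth x0 c j -> i = j) /\
  (forall i j, i < n -> j < n ->
     (adj (nth x0 c i) (nth x0 c j) <-> (j = (i + 1) %% n \/ i = (j + 1) %% n))).

(* A vertex set contains the cycle c (equivalently, the induced subgraph contains it). *)
Definition contains_cycle (I : V -> Prop) (x0 : V) (c : seq V) : Prop :=
  forall i, i < size c -> I (nth x0 c i).

Definition contains_all_cycles (adj : V -> V -> Prop) (I : V -> Prop) : Prop :=
  forall x0 c, is_cycle adj x0 c -> contains_cycle I x0 c.

Definition pre_cycle_core (adj : V -> V -> Prop) (I : V -> Prop) : Prop :=
  connected_on adj I /\ contains_all_cycles adj I.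

Definition component (adj : V -> V -> Prop) (I : V -> Prop) (x : V) : V -> Prop :=
  fun v => exists p, is_walk (induced adj I) x p /\ last x p = v.

End Graphs.

(* Main.v *)
Require Import Defs.
From mathcomp Require Import all_boot.
From mathcomp Require Import zify.
From Stdlib Require Import Classical.
Set Implicit Arguments. Unset Strict Implicit. Unset Printing Implicit Defensive.

Lemma least (P : nat -> Prop) d : P d ->
  exists e, e <= d /\ P e /\ forall s, s < e -> ~ P s.
Proof.
elim/ltn_ind: d => d IH Pd.
case: (classic (exists s, s < d /\ P s)) => [[s [sd Ps]]|H].
- have [e [es [Pe He]]] := IH s sd Ps.
  exists e; split; [lia | by split].
- exists d; split => //; split => // s sd Ps; apply: H; by exists s.
Qed.

Lemma walk_nth (V : Type) (R : V -> V -> Prop) d x p :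
  is_walk R x p <-> forall k, k < size p -> R (nth d (x::p) k) (nth d (x::p) k.+1).
Proof.
elim: p x => [|y p IH] x /=.
  split => // _ k hk; lia.
rewrite IH; split.
- move=> [rxy H] [|k] hk //=. exact: H.
- move=> H; split; first exact: (H 0).
  move=> k hk; exact: (H k.+1 hk).
Qed.

Lemma nb_nth (V : Type) d (x : V) p :
  non_backtracking x p <-> forall k, k.+1 < size p -> nth d (x::p) k <> nth d (x::p) k.+2.
Proof.
elim: p x => [|y p IH] x /=.
  split => // _ k hk; lia.
case: p IH => [|z q] IH.
  split => // _ k hk /=; lia.
change ((x <> z /\ non_backtracking y (z :: q)) <-> forall k, k.+1 < (size q).+2 -> nth d [:: x, y, z & q] k <> nth d [:: x, y, z & q] k.+2).
rewrite IH; split.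
- move=> [xz H] [|k] hk //=. exact: H.
- move=> H; split; first exact: (H 0).
  move=> k hk; exact: (H k.+1 hk).
Qed.

Lemma walk_prefix (V : Type) (R : V -> V -> Prop) d x p : is_walk R x p ->
  forall k, k <= size p -> is_walk R x (take k p) /\ last x (take k p) = nth d (x::p) k.
Proof.
elim: p x => [|y p IH] x /=.
- move=> _ k; rewrite leqn0 => /eqP -> //.
- move=> [rxy w] [|k] hk //=.
  have [w' l'] := IH y w k hk. by split.
Qed.

Lemma walk_sub V (adj : V->V->Prop) I x p : is_walk (induced adj I) x p -> is_walk adj x p.
Proof. elim: p x => [|y p IH] x //= [[_ [_ a]] w]; split => //; exact: IH. Qed.

Lemma modS i n : i < n -> ((i+1) %% n = i+1 /\ i+1 < n) \/ ((i+1) %% n = 0 /\ i+1 = n).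
Proof.
move=> h; case: (ltnP (i+1) n) => h2.
- left; by rewrite modn_small.
- right; have e : i + 1 = n by lia. by rewrite e modnn.
Qed.

Definition SCf (V : Type) (adj : V -> V -> Prop) (f : nat -> V) (n : nat) : Prop :=
  3 <= n /\ (forall i j, i < n -> j < n -> f i = f j -> i = j) /\
  (forall k, k.+1 < n -> adj (f k) (f k.+1)) /\ adj (f n.-1) (f 0).

Lemma chordless (V : Type) (adj : V -> V -> Prop) : simple_graph adj ->
  forall n (f : nat -> V), SCf adj f n -> forall t, t < n -> forall x0,
  exists c, is_cycle adj x0 c /\ exists i, i < size c /\ nth x0 c i = f t.
Proof.
move=> [sym irr]; elim/ltn_ind => n IH f [n3 [inj [cons clo]]] t tn x0.
have consn : forall a b, a < n -> b < n -> (b = a + 1 \/ (a + 1 = n /\ b = 0)) -> adj (f a) (f b).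
  move=> a b an bn [e|[e e']]; subst b; first by rewrite addn1; apply: cons; lia.
  have -> : a = n.-1 by lia. exact: clo.
case: (classic (is_cycle adj x0 (mkseq f n))) => Hc.
  exists (mkseq f n); split => //; exists t; by rewrite size_mkseq nth_mkseq.
have [i [j [iln [jln [aij nc]]]]] : exists i j, i < n /\ j < n /\ adj (f i) (f j) /\
    ~ (j = (i+1) %% n \/ i = (j+1) %% n).
  apply: NNPP => Hn; apply: Hc; rewrite /is_cycle size_mkseq; split => //; split.
  - move=> a b an bn; rewrite !nth_mkseq //; exact: inj.
  - move=> a b an bn; rewrite !nth_mkseq //; split.
    + move=> h; apply: NNPP => nn; apply: Hn; by exists a, b.
    + case=> e.
      * apply: consn => //; case: (modS an) => [[e1 _]|[e1 e2]]; lia.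
      * apply: sym; apply: consn => //; case: (modS bn) => [[e1 _]|[e1 e2]]; lia.
have nc' : j <> i + 1 /\ i <> j + 1 /\ ~ (i + 1 = n /\ j = 0) /\ ~ (j + 1 = n /\ i = 0).
  case: (modS iln) => [[e1 e2]|[e1 e2]]; case: (modS jln) => [[e3 e4]|[e3 e4]];
  rewrite e1 e3 in nc; lia.
clear Hc nc.
wlog lij : i j iln jln aij nc' / i < j.
  move=> W; case: (ltngtP i j) => h.
  - exact: (W i j).
  - apply: (W j i) => //; [exact: sym | lia].
  - subst j; exfalso; exact: (irr _ aij).
have [hij|hij] : (i <= t /\ t <= j) \/ (t < i \/ j < t) by lia.
- pose g k := f (i + k).
  have sc : SCf adj g (j - i).+1.
    split; [lia|split; [|split]].
    + move=> a b al bl; rewrite /g => e; have := inj (i+a) (i+b) ltac:(lia) ltac:(lia) e; lia.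
    + move=> k kl; rewrite /g addnS; apply: cons; lia.
    + have -> : g (j - i).+1.-1 = f j by rewrite /g; f_equal; lia.
      have -> : g 0 = f i by rewrite /g addn0.
      exact: sym.
  have [c [cc [k [kc e]]]] := IH (j - i).+1 ltac:(lia) g sc (t - i) ltac:(lia) x0.
  exists c; split => //; exists k; split => //; rewrite e /g; f_equal; lia.
- pose h k := if k <= n.-1 - j then f (j + k) else f (k - (n - j)).
  have h1 : forall k, k <= n.-1 - j -> h k = f (j + k) by move=> k hk; rewrite /h hk.
  have h2 : forall k, n.-1 - j < k -> h k = f (k - (n - j)) by move=> k hk; rewrite /h leqNgt hk.
  have sc : SCf adj h (n - j + i).+1.
    split; [lia | split; [|split]].
    + move=> a b al bl.
      case: (leqP a (n.-1 - j)) => ha; case: (leqP b (n.-1 - j)) => hb.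
      * rewrite (h1 a ha) (h1 b hb) => e; have := inj (j+a) (j+b) ltac:(lia) ltac:(lia) e; lia.
      * rewrite (h1 a ha) (h2 b hb) => e; have := inj (j+a) (b - (n-j)) ltac:(lia) ltac:(lia) e; lia.
      * rewrite (h2 a ha) (h1 b hb) => e; have := inj (a - (n-j)) (j+b) ltac:(lia) ltac:(lia) e; lia.
      * rewrite (h2 a ha) (h2 b hb) => e; have := inj (a - (n-j)) (b - (n-j)) ltac:(lia) ltac:(lia) e; lia.
    + move=> k kl.
      have [hk|[hk|hk]] : k.+1 <= n.-1 - j \/ k = n.-1 - j \/ n.-1 - j < k by lia.
      * rewrite (h1 k ltac:(lia)) (h1 k.+1 ltac:(lia)) addnS; apply: cons; lia.
      * rewrite (h1 k ltac:(lia)) (h2 k.+1 ltac:(lia)).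
        have -> : j + k = n.-1 by lia.
        have -> : k.+1 - (n - j) = 0 by lia.
        exact: clo.
      * rewrite (h2 k ltac:(lia)) (h2 k.+1 ltac:(lia)).
        have -> : k.+1 - (n - j) = (k - (n - j)).+1 by lia.
        apply: cons; lia.
    + have -> : h (n - j + i).+1.-1 = f i by rewrite h2; [f_equal; lia | lia].
      have -> : h 0 = f j by rewrite h1; [f_equal; lia | lia].
      exact: aij.
  have [k [kn hk]] : exists k, k < (n - j + i).+1 /\ h k = f t.
    case: hij => ht.
    + exists (t + (n - j)); split; first lia.
      rewrite h2; [f_equal; lia | lia].
    + exists (t - j); split; first lia.
      rewrite h1; [f_equal; lia | lia].
  have [c [cc [k' [kc e]]]] := IH (n - j + i).+1 ltac:(lia) h sc k kn x0.
  exists c; split => //; exists k'; split => //; by rewrite e hk.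
Qed.

Lemma repeat_cycle (V : Type) (adj : V -> V -> Prop) : simple_graph adj ->
  forall (f : nat -> V) a b,
  (forall k, a <= k -> k < b -> adj (f k) (f k.+1)) ->
  (forall k, a <= k -> k.+2 <= b -> f k <> f k.+2) ->
  forall a1 b1, a <= a1 -> a1 < b1 -> b1 <= b -> f a1 = f b1 ->
  exists a0 b0, a <= a0 /\ a0 + 3 <= b0 /\ b0 <= b /\ SCf adj (fun k => f (a0 + k)) (b0 - a0).
Proof.
move=> [sym irr] f a b w nb a1 b1 h1 h2 h3 e.
have [b0 [b0b [[a0 [ha0 [ha0' e0]]] mn]]] :=
  @least (fun b' => exists a', a <= a' /\ a' < b' /\ f a' = f b') b1 (ex_intro _ a1 (conj h1 (conj h2 e))).
have ne1 : b0 <> a0.+1.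
  move=> E; apply: (irr (f a0)); rewrite {2}e0 E; apply: w; lia.
have ne2 : b0 <> a0.+2.
  move=> E; apply: (nb a0); [lia|lia|by rewrite -E].
exists a0, b0; split; first lia; split; first lia; split; first lia.
split; first lia; split; [|split].
- move=> i j il jl eij.
  case: (ltngtP i j) => hij //.
  + exfalso; apply: (mn (a0 + j)); first lia. exists (a0 + i); split; [lia|split; [lia|exact eij]].
  + exfalso; apply: (mn (a0 + i)); first lia. exists (a0 + j); split; [lia|split; [lia|by rewrite eij]].
- move=> k kl; rewrite addnS; apply: w; lia.
- rewrite addn0 e0.
  have -> : a0 + (b0 - a0).-1 = b0.-1 by lia.
  have {2}-> : b0 = (b0.-1).+1 by lia.
  apply: w; lia.
Qed.

Lemma shorten_walk (V : Type) (R : V -> V -> Prop) : forall M (h : nat -> V),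
  (forall k, k < M -> R (h k) (h k.+1)) ->
  exists M' h', h' 0 = h 0 /\ h' M' = h M /\
   (forall k, k < M' -> R (h' k) (h' k.+1)) /\
   (forall i j, i <= M' -> j <= M' -> h' i = h' j -> i = j) /\
   (forall k, k <= M' -> exists k', k' <= M /\ h' k = h k' /\ (k < M' -> k' < M)).
Proof.
elim/ltn_ind => M IH h w.
case: (classic (exists i j, i < j /\ j <= M /\ h i = h j)) => [[i [j [ij [jM e]]]]|H].
- pose h2 k := if k <= i then h k else h (k + (j - i)).
  have e1 : forall k, k <= i -> h2 k = h k by move=> k hk; rewrite /h2 hk.
  have e2 : forall k, i < k -> h2 k = h (k + (j - i)) by move=> k hk; rewrite /h2 leqNgt hk.
  have w2 : forall k, k < M - (j - i) -> R (h2 k) (h2 k.+1).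
    move=> k kl.
    have [hk|[hk|hk]] : k < i \/ k = i \/ i < k by lia.
    + rewrite (e1 k ltac:(lia)) (e1 k.+1 ltac:(lia)); apply: w; lia.
    + rewrite (e1 k ltac:(lia)) (e2 k.+1 ltac:(lia)). subst k. rewrite e.
      have -> : i.+1 + (j - i) = j.+1 by lia.
      apply: w; lia.
    + rewrite (e2 k ltac:(lia)) (e2 k.+1 ltac:(lia)).
      have -> : k.+1 + (j - i) = (k + (j - i)).+1 by lia.
      apply: w; lia.
  have [M' [h' [s0 [s1 [w' [inj' mem']]]]]] := IH (M - (j - i)) ltac:(lia) h2 w2.
  exists M', h'; split; first by rewrite s0 e1.
  split.
    rewrite s1; case: (leqP (M - (j - i)) i) => hh.
    + rewrite e1 //; have -> : M - (j - i) = i by lia. rewrite e; f_equal; lia.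
    + rewrite e2 //; f_equal; lia.
  split => //; split => //.
  move=> k kM; have [k' [k'M [hk' lt']]] := mem' k kM.
  case: (leqP k' i) => hh.
  + exists k'; split; first lia; split; first by rewrite hk' e1.
    move=> kk; have := lt' kk; lia.
  + exists (k' + (j - i)); split; first lia; split; first by rewrite hk' e2.
    move=> kk; have := lt' kk; lia.
- exists M, h; split => //; split => //; split => //; split.
  + move=> i j iM jM e; case: (ltngtP i j) => hij //; exfalso; apply: H.
    * by exists i, j.
    * by exists j, i.
  + move=> k kM; exists k; split => //.
Qed.

Lemma part1 (V : Type) (adj : V -> V -> Prop) (I : V -> Prop) :
  simple_graph adj -> pre_cycle_core adj I ->
  forall x y, I x -> I y -> forall p, pi1 (induced adj I) x y p <-> pi1 adj x y p.
Proof.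
move=> sg [[_ conn] cyc] x y Ix Iy p; split.
  by move=> [w [nb l]]; split => //; exact: walk_sub w.
move=> [w [nb l]]; split => //.
pose F k := nth x (x::p) k.
pose L := size p.
have wF : forall k, k < L -> adj (F k) (F k.+1) := (proj1 (@walk_nth _ _ x x p)) w.
have nbF : forall k, k.+1 < L -> F k <> F k.+2 := (proj1 (@nb_nth _ x x p)) nb.
have FL : F L = y.
  rewrite /F; have := (@walk_prefix _ _ x x p w L (leqnn _)).2; rewrite take_size l => <- //.
have contra : forall n g, SCf adj g n -> forall t, t < n -> ~ I (g t) -> False.
  move=> n g sc t tn Jt.
  have [c [cc [i [ic e]]]] := chordless sg sc tn x.
  apply: Jt; rewrite -e; exact: cyc x c cc i ic.
have main : forall a b, a.+1 < b -> b <= L -> I (F a) -> I (F b) ->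
    (forall u, a < u -> u < b -> ~ I (F u)) -> False.
  move=> a b ab bL Ia Ib Jab.
  case: (classic (exists a1 b1, a <= a1 /\ a1 < b1 /\ b1 <= b /\ F a1 = F b1))
    => [[a1 [b1 [h1 [h2 [h3 e]]]]]|NR].
  - have wab : forall k, a <= k -> k < b -> adj (F k) (F k.+1) by move=> k _ kb; apply: wF; lia.
    have nbab : forall k, a <= k -> k.+2 <= b -> F k <> F k.+2 by move=> k _ kb; apply: nbF; lia.
    have [a0 [b0 [ha0 [hab [hb0 sc]]]]] := @repeat_cycle _ _ sg F a b wab nbab a1 b1 h1 h2 h3 e.
    apply: (contra _ _ sc 1); first lia.
    apply: Jab; lia.
  - have [q [wq lq]] := conn (F b) (F a) Ib Ia.
    pose H k := nth (F b) (F b :: q) k.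
    pose M := size q.
    have wH : forall k, k < M -> induced adj I (H k) (H k.+1) := (proj1 (@walk_nth _ _ (F b) (F b) q)) wq.
    have HI : forall k, k <= M -> I (H k).
      case=> [|k] kM; first exact: Ib.
      exact: (wH k kM).2.1.
    have HM : H M = F a.
      rewrite /H; have := (@walk_prefix _ _ (F b) (F b) q wq M (leqnn _)).2; rewrite take_size lq => <- //.
    have [M' [h' [s0 [s1 [w' [inj' mem']]]]]] := @shorten_walk _ _ M H wH.
    have hI : forall k, k <= M' -> I (h' k).
      move=> k kM; have [k' [k'M [-> _]]] := mem' k kM; exact: HI.
    have hM : h' M' = F a by rewrite s1 HM.
    have h0 : h' 0 = F b by rewrite s0.
    have M'p : 0 < M'.
      case: (posnP M') => // E; exfalso; apply: NR; exists a, b; do 3!(split; first lia).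
      by rewrite -hM -h0 E.
    pose c k := if k <= b - a then F (a + k) else h' (k - (b - a)).
    have c1 : forall k, k <= b - a -> c k = F (a + k) by move=> k hk; rewrite /c hk.
    have c2 : forall k, b - a <= k -> c k = h' (k - (b - a)).
      move=> k hk; case: (leqP k (b - a)) => hk2.
      + have ek : k = b - a by lia.
        rewrite c1 //; have -> : k - (b - a) = 0 by lia.
        rewrite h0; f_equal; lia.
      + by rewrite /c leqNgt hk2.
    have cross : forall i j, i <= b - a -> b - a < j -> j < b - a + M' -> c i <> c j.
      move=> i j hi hj1 hj2; rewrite c1 // c2; last lia.
      move=> e.
      have Ii : I (F (a + i)) by rewrite e; apply: hI; lia.
      have [i0|ib] : i = 0 \/ i = b - a.
        case: (posnP i) => ?; [by left | right].
        apply: NNPP => ne; apply: (Jab (a + i)) => //; lia.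
      + rewrite i0 addn0 -hM in e.
        have := inj' M' (j - (b - a)) (leqnn _) ltac:(lia) e; lia.
      + have ea : a + i = b by lia.
        rewrite ea -h0 in e.
        have := inj' 0 (j - (b - a)) (leq0n _) ltac:(lia) e; lia.
    have sc : SCf adj c (b - a + M').
      split; first lia; split; [|split].
      + move=> i j il jl e.
        case: (leqP i (b - a)) => hi; case: (leqP j (b - a)) => hj.
        * rewrite c1 // c1 // in e.
          case: (ltngtP i j) => hij //; exfalso; apply: NR.
          -- exists (a + i), (a + j); do 3!(split; first lia); exact e.
          -- exists (a + j), (a + i); do 3!(split; first lia); by rewrite e.
        * exfalso; exact: (cross i j hi hj jl e).
        * exfalso; exact: (cross j i hj hi il (esym e)).
        * rewrite c2 ?c2 in e; try lia.
          have := inj' (i - (b - a)) (j - (b - a)) ltac:(lia) ltac:(lia) e; lia.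
      + move=> k kl; case: (leqP k.+1 (b - a)) => hk.
        * rewrite c1 ?c1; try lia. rewrite addnS; apply: wF; lia.
        * rewrite c2 ?c2; try lia.
          have -> : k.+1 - (b - a) = (k - (b - a)).+1 by lia.
          exact: (w' (k - (b - a)) ltac:(lia)).2.2.
      + rewrite c2; last lia. rewrite c1 // addn0 -hM.
        have eK : ((b - a + M').-1 - (b - a)).+1 = M' by lia.
        have := (w' ((b - a + M').-1 - (b - a)) ltac:(lia)).2.2; by rewrite eK.
    apply: (contra _ _ sc 1); first lia.
    rewrite c1; last lia. apply: Jab; lia.
have allI : forall t, t <= L -> I (F t).
  move=> t tL; apply: NNPP => Jt.
  have P1 : t <= t /\ I (F (t - t)) by rewrite subnn.
  have [s0 [s0t [[_ Ia] mna]]] := @least (fun s => s <= t /\ I (F (t - s))) t P1.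
  have P2 : t + (L - t) <= L /\ I (F (t + (L - t))).
    have -> : t + (L - t) = L by lia. by rewrite FL.
  have [e0 [e0L [[te0 Ib] mnb]]] := @least (fun e => t + e <= L /\ I (F (t + e))) (L - t) P2.
  have s0p : 0 < s0.
    case: (posnP s0) => // E; exfalso; apply: Jt; by rewrite -[t]subn0 -E.
  have e0p : 0 < e0.
    case: (posnP e0) => // E; exfalso; apply: Jt; by rewrite -[t]addn0 -E.
  apply: (main (t - s0) (t + e0)) => //; try lia.
  move=> u h1 h2 Iu; case: (leqP u t) => hu.
  - apply: (mna (t - u)); first lia. split; first lia. by have -> : t - (t - u) = u by lia.
  - apply: (mnb (u - t)); first lia. split; first lia. by have -> : t + (u - t) = u by lia.
apply/(@walk_nth _ _ x x p) => k kL.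
split; [apply: allI; lia | split; [apply: allI; lia | exact: wF]].
Qed.

Lemma part2 (V : Type) (adj : V -> V -> Prop) (I : V -> Prop) :
  simple_graph adj -> connected adj -> forall x, I x ->
  (forall p, pi1 (induced adj I) x x p <-> pi1 adj x x p) ->
  contains_all_cycles adj (component adj I x).
Proof.
move=> [sym irr] conn x Ix H x0 c [n3 [inj adjiff]] i il.
set n := size c in n3 inj adjiff il.
pose cf k := nth x0 c k.
have consn : forall a b, a < n -> b < n -> (b = a + 1 \/ (a + 1 = n /\ b = 0)) -> adj (cf a) (cf b).
  move=> a b an bn hb; apply/(adjiff a b an bn); left.
  case: (modS an) => [[e1 _]|[e1 e2]]; rewrite e1; lia.
pose Cyc v := exists s, s < n /\ cf s = v.
have [p0 [w0 l0]] := conn x (cf 0).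
pose H0 k := nth x (x::p0) k.
have wH0 : forall k, k < size p0 -> adj (H0 k) (H0 k.+1) := (proj1 (@walk_nth _ _ x x p0)) w0.
have H0M : H0 (size p0) = cf 0.
  rewrite /H0; have := (@walk_prefix _ _ x x p0 w0 (size p0) (leqnn _)).2; rewrite take_size l0 => <- //.
have P0 : size p0 <= size p0 /\ Cyc (H0 (size p0)).
  split => //; exists 0; split; [lia | by rewrite H0M].
have [e [eM [[_ [s0 [s0n es0]]] mne]]] := @least (fun e => e <= size p0 /\ Cyc (H0 e)) (size p0) P0.
have wH0e : forall k, k < e -> adj (H0 k) (H0 k.+1) by move=> k ke; apply: wH0; lia.
have [M' [h' [hs0 [hs1 [w' [inj' mem']]]]]] := @shorten_walk _ _ e H0 wH0e.
have notC : forall k, k < M' -> ~ Cyc (h' k).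
  move=> k kM; have [k' [k'e [-> lt]]] := mem' k (ltnW kM).
  move=> C; apply: (mne k' (lt kM)); split => //; lia.
have hx : h' 0 = x by rewrite hs0.
have hM : h' M' = cf s0 by rewrite hs1 es0.
pose r k := if s0 + k < n then cf (s0 + k) else cf (s0 + k - n).
have r1 : forall k, s0 + k < n -> r k = cf (s0 + k) by move=> k hk; rewrite /r hk.
have r2 : forall k, n <= s0 + k -> r k = cf (s0 + k - n) by move=> k hk; rewrite /r ltnNge hk.
have r0 : r 0 = cf s0 by rewrite r1 ?addn0 //; lia.
have rn : r n = cf s0 by rewrite r2; [f_equal; lia | lia].
have radj : forall k, k < n -> adj (r k) (r k.+1).
  move=> k kn.
  have [hk|[hk|hk]] : s0 + k.+1 < n \/ s0 + k.+1 = n \/ n < s0 + k.+1 by lia.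
  - rewrite r1 ?r1; try lia. apply: consn; lia.
  - rewrite r1 ?r2; try lia. apply: consn; lia.
  - rewrite r2 ?r2; try lia. apply: consn; lia.
have rC : forall k, k <= n -> Cyc (r k).
  move=> k kn; case: (ltnP (s0 + k) n) => hk.
  - exists (s0 + k); split => //; by rewrite r1.
  - exists (s0 + k - n); split; first lia; by rewrite r2.
have rinj : forall a b, a < n -> b < n -> r a = r b -> a = b.
  move=> a b an bn; case: (ltnP (s0 + a) n) => ha; case: (ltnP (s0 + b) n) => hb.
  - rewrite r1 // r1 // => E; have := inj (s0 + a) (s0 + b) ha hb E; lia.
  - rewrite r1 // r2 // => E; have := inj (s0 + a) (s0 + b - n) ha ltac:(lia) E; lia.
  - rewrite r2 // r1 // => E; have := inj (s0 + a - n) (s0 + b) ltac:(lia) hb E; lia.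
  - rewrite r2 // r2 // => E; have := inj (s0 + a - n) (s0 + b - n) ltac:(lia) ltac:(lia) E; lia.
pose L := M' + n + M'.
pose W k := if k <= M' then h' k else if k <= M' + n then r (k - M') else h' (L - k).
have W1 : forall k, k <= M' -> W k = h' k by move=> k hk; rewrite /W hk.
have W2 : forall k, M' <= k -> k <= M' + n -> W k = r (k - M').
  move=> k h1 h2; case: (leqP k M') => hk.
  - have -> : k - M' = 0 by lia. have ek : k = M' by lia.
    by rewrite ek W1 // hM r0.
  - by rewrite /W leqNgt hk /= h2.
have W3 : forall k, M' + n <= k -> k <= L -> W k = h' (L - k).
  move=> k h1 h2; case: (leqP k (M' + n)) => hk.
  - have ek : k = M' + n by lia.
    rewrite W2; try lia. have -> : L - k = M' by lia. rewrite hM ek.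
    have -> : M' + n - M' = n by lia. exact: rn.
  - have hk' : M' < k by lia.
    by rewrite /W leqNgt hk' /= leqNgt hk.
pose p := mkseq (fun k => W k.+1) L.
have nthW : forall k, k <= L -> nth x (x::p) k = W k.
  case=> [|k] kL /=; first by rewrite W1 // hx.
  by rewrite nth_mkseq.
have sp : size p = L by rewrite size_mkseq.
have wW : is_walk adj x p.
  apply/(@walk_nth _ _ x x p) => k; rewrite sp => kL.
  rewrite (nthW k ltac:(lia)) (nthW k.+1 ltac:(lia)).
  have [hk|[hk|hk]] : k < M' \/ (M' <= k /\ k < M' + n) \/ M' + n <= k by lia.
  - rewrite W1 ?W1; try lia. exact: (w' k hk).
  - rewrite W2 ?W2; try lia. have -> : k.+1 - M' = (k - M').+1 by lia. apply: radj; lia.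
  - rewrite W3 ?W3; try lia. have -> : L - k = (L - k.+1).+1 by lia.
    apply: sym; apply: w'; lia.
have nbW : non_backtracking x p.
  apply/(@nb_nth _ x x p) => k; rewrite sp => kL.
  rewrite (nthW k ltac:(lia)) (nthW k.+2 ltac:(lia)).
  have [hk|[hk|[hk|[hk|hk]]]] : k.+2 <= M' \/ k.+1 = M' \/ (M' <= k /\ k.+2 <= M' + n)
      \/ k.+1 = M' + n \/ M' + n <= k by lia.
  - rewrite W1 ?W1; try lia. move=> E; have := inj' k k.+2 ltac:(lia) ltac:(lia) E; lia.
  - rewrite W1 ?W2; try lia. move=> E; apply: (notC k); first lia.
    rewrite E; apply: rC; lia.
  - rewrite W2 ?W2; try lia. move=> E.
    case: (ltnP (k.+2 - M') n) => h2.
    + have := rinj (k - M') (k.+2 - M') ltac:(lia) h2 E; lia.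
    + have e2 : k.+2 - M' = n by lia.
      rewrite e2 rn -r0 in E.
      have := rinj (k - M') 0 ltac:(lia) ltac:(lia) E; lia.
  - rewrite W2 ?W3; try lia. move=> E; apply: (notC (L - k.+2)); first lia.
    rewrite -E; apply: rC; lia.
  - rewrite W3 ?W3; try lia. move=> E; have := inj' (L - k) (L - k.+2) ltac:(lia) ltac:(lia) E; lia.
have lW : last x p = x.
  have := (@walk_prefix _ _ x x p wW L ltac:(lia)).2.
  rewrite -sp take_size => ->; rewrite sp nthW // W3; try lia.
  by rewrite subnn hx.
have [wI _] := proj2 (H p) (conj wW (conj nbW lW)).
have [j [jn rj]] : exists j, j < n /\ r j = cf i.
  case: (leqP s0 i) => hs.
  - exists (i - s0); split; first lia. rewrite r1; [f_equal; lia | lia].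
  - exists (i + n - s0); split; first lia. rewrite r2; [f_equal; lia | lia].
have [wq lq] := @walk_prefix _ _ x x p wI (M' + j) ltac:(lia).
exists (take (M' + j) p); split => //.
rewrite lq nthW; last lia.
rewrite W2; try lia. have -> : M' + j - M' = j by lia. exact: rj.
Qed.

Theorem lemma2p5 (V : Type) (adj : V -> V -> Prop) (I : V -> Prop) :
  simple_graph adj -> connected adj ->
  (pre_cycle_core adj I ->
     forall x y, I x -> I y ->
       forall p, pi1 (induced adj I) x y p <-> pi1 adj x y p) /\
  (forall x, I x ->
     (forall p, pi1 (induced adj I) x x p <-> pi1 adj x x p) ->
     contains_all_cycles adj (component adj I x)).
Proof.
move=> sg conn; split.
- move=> pc; exact: part1 sg pc.
- exact: part2 sg conn.
Qed.
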